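(* Let $n\ge1$, $\mathcal{N}=\mathbb{C}^{2^n}$. For every $\phi\in\mathcal{N}$, every $i\in[n]$ and every $S\subseteq\{0,1\}^{n-1}$, $$|\phi^*E_{i,S}\phi-\phi^*\phi|\le 2^{n-1}I_i(\phi).$$
   Context: A vector $\phi=\sum_x\phi(x)|x\rangle\in\mathcal{N}$ is identified with the function $\phi:\{0,1\}^n\to\mathbb{C}$. $I_i(\phi)=\mathbb{E}_{x\in\{0,1\}^n}|\phi(x)-\phi(x\oplus e_i)|^2$, with $e_i$ the $i$-th unit vector. $E_{i,S}$ is the linear operator with $E_{i,S}|x\rangle=|x\oplus e_i\rangle$ if $(x_1,\dots,x_{i-1},x_{i+1},\dots,x_n)\in S$ and $E_{i,S}|x\rangle=|x\rangle$ otherwise. *)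

(* Defs.v *)
From HB Require Import structures.
From mathcomp Require Import all_boot all_order all_algebra.
From mathcomp Require Import complex.
Set Implicit Arguments. Unset Strict Implicit. Unset Printing Implicit Defensive.
Import Order.TTheory GRing.Theory Num.Theory.
Local Open Scope ring_scope.

Definition bits (n : nat) := {ffun 'I_n -> bool}.

Definition flip (n : nat) (x : bits n) (i : 'I_n) : bits n :=
  [ffun j => if j == i then ~~ x j else x j].

Definition drop_coord (n : nat) (x : bits n) (i : 'I_n) : bits n.-1 :=
  [ffun j => x (lift i j)].

(* E_{i,S}|x> as a basis vector index *)
Definition Ebasis (n : nat) (i : 'I_n) (S : {set bits n.-1}) (x : bits n) : bits n :=
  if drop_coord x i \in S then flip x i else x.

(* phi^* E_{i,S} phi = sum_x phi(x) <phi | E_{i,S} x> *)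
Definition quadE (R : rcfType) (n : nat) (i : 'I_n) (S : {set bits n.-1})
  (phi : bits n -> R[i]) : R[i] :=
  \sum_(x : bits n) (phi (Ebasis i S x))^* * phi x.

Definition sqnorm (R : rcfType) (n : nat) (phi : bits n -> R[i]) : R[i] :=
  \sum_(x : bits n) (phi x)^* * phi x.

Definition influence (R : rcfType) (n : nat) (i : 'I_n) (phi : bits n -> R[i]) : R[i] :=
  (2 ^+ n)^-1 * \sum_(x : bits n) `|phi x - phi (flip x i)| ^+ 2.

(* Main.v *)
Require Import Defs.
From HB Require Import structures.
From mathcomp Require Import all_boot all_order all_algebra.
From mathcomp Require Import complex.
Import Order.TTheory GRing.Theory Num.Theory.
Local Open Scope ring_scope.

Lemma flipK (n : nat) (i : 'I_n) (x : bits n) : flip (flip x i) i = x.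
Proof. by apply/ffunP => j; rewrite !ffunE; case: eqP => //; rewrite negbK. Qed.

Lemma drop_flip (n : nat) (i : 'I_n) (x : bits n) :
  drop_coord (flip x i) i = drop_coord x i.
Proof. by apply/ffunP => j; rewrite !ffunE eq_sym (negbTE (neq_lift _ _)). Qed.

Theorem lemma1 (R : rcfType) (n : nat) (hn : (1 <= n)%N)
  (phi : bits n -> R[i]) (i : 'I_n) (S : {set bits n.-1}) :
  `|quadE i S phi - sqnorm phi| <= 2 ^+ n.-1 * influence i phi.
Proof.
set T := fun x : bits n => drop_coord x i \in S.
set d := fun x : bits n => phi (flip x i) - phi x.
set g := fun x : bits n => if T x then (d x)^* * phi x else 0.
set h := fun x : bits n => if T x then `|d x| ^+ 2 else (0 : R[i]).
have E1 : quadE i S phi - sqnorm phi = \sum_x g x.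
  rewrite /quadE /sqnorm -sumrB; apply: eq_bigr => x _.
  rewrite /Ebasis /g /T /d; case: ifP => _; last by rewrite subrr.
  by rewrite -mulrBl rmorphB.
have E2 : \sum_x g x = \sum_x g (flip x i).
  apply: reindex_inj => x y Hxy.
  by rewrite -(@flipK _ i x) Hxy flipK.
have E3 : (\sum_x g x) *+ 2 = - \sum_x h x.
  rewrite mulr2n {2}E2 -big_split -sumrN; apply: eq_bigr => x _ /=.
  rewrite /g /h /T drop_flip; case: ifP => _; last by rewrite oppr0 addr0.
  rewrite /d flipK normCK -[phi x - _]opprB rmorphN /=.
  set a := phi (flip x i); set b := phi x.
  by rewrite mulNr -mulrBr mulrC -[b - a]opprB mulNr.
have hge : 0 <= \sum_x h x.
  by apply: sumr_ge0 => x _; rewrite /h; case: ifP => // _; rewrite exprn_ge0.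
have E4 : `|\sum_x g x| = (\sum_x h x) / 2.
  have -> : \sum_x g x = - (\sum_x h x) / 2.
    by rewrite -E3 -mulr_natr mulfK // pnatr_eq0.
  rewrite normrM normrN normfV ger0_norm // ger0_norm //.
have hle : \sum_x h x <= \sum_x `|phi x - phi (flip x i)| ^+ 2.
  apply: ler_sum => x _; rewrite /h /d distrC.
  by case: ifP => // _; rewrite exprn_ge0.
rewrite E1 E4 /influence mulrA.
have -> : (2 : R[i]) ^+ n.-1 * (2 ^+ n)^-1 = 2^-1.
  case: n hn phi i S T d g h E1 E2 E3 hge E4 hle => // m _ *.
  rewrite exprS /= invfM mulrA mulrC mulrA mulVf ?mul1r //.
  by rewrite expf_neq0 // pnatr_eq0.
by rewrite mulrC ler_wpM2l // invr_ge0 ler0n.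
Qed.
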